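(* Let $A$ be a nontrivial finite abelian group, let $\Gamma$ be an alphabet and let $G\le\llbracket\Gamma^{\mathbb{Z}}\rrbracket$ be a subgroup whose action is move-$A$ithful. Then for every alphabet $\Sigma$, the restricted wreath product $A\wr G=\left(\bigoplus_{G}A\right)\rtimes G$ embeds as a subgroup of $\llbracket\Sigma^{\mathbb{Z}}\rrbracket$.
   Context: An alphabet is a finite set with at least two elements. $\llbracket\Sigma^{\mathbb{Z}}\rrbracket$ is the group of homeomorphisms $f$ of $\Sigma^{\mathbb{Z}}$ with a continuous cocycle $c_f:\Sigma^{\mathbb{Z}}\to\mathbb{Z}$ such that $f(x)=\sigma^{c_f(x)}(x)$, where $\sigma(x)_i=x_{i+1}$; for $g\in G$ write $c_g$ for its cocycle. For a finite abelian group $A$, the action of $G$ is move-$A$ithful if for every map $\beta:G\to A$ with finite nonempty support there exist $x\in\Gamma^{\mathbb{Z}}$ and $\gamma:\mathbb{Z}\to\mathrm{End}(A)$ with $\sum_{g\in G}\gamma(c_g(x))(\beta(g))\neq0_A$. In $A\wr G$, $G$ acts on $\bigoplus_G A$ by left translation of coordinates. *)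

(* Defs.v *)
From HB Require Import structures.
From mathcomp Require Import all_boot all_order all_algebra.
From mathcomp Require Import boolp classical_sets cardinality fsbigop.
From Stdlib Require Import ClassicalEpsilon.
Set Implicit Arguments. Unset Strict Implicit. Unset Printing Implicit Defensive.
Import Order.TTheory GRing.Theory Num.Theory.
Local Open Scope classical_set_scope.
Local Open Scope ring_scope.

Definition conf (S : Type) := int -> S.

(* Self-maps of S^Z; equipped (classically) with a choice structure so that
   finitely supported sums over sets of them can be formed. *)
Definition endo (S : Type) := conf S -> conf S.
HB.instance Definition _ (S : Type) := gen_eqMixin (endo S).
HB.instance Definition _ (S : Type) := gen_choiceMixin (endo S).

Definition shift (S : Type) (n : int) (x : conf S) : conf S := fun i => x (i + n).

Definition alphabet (S : finType) : Prop := (1 < #|S|)%N.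

(* x and y agree on the window [-N, N] (basic cylinder neighbourhoods of
   the product topology of discrete spaces). *)
Definition agree (S : Type) (N : nat) (x y : conf S) : Prop :=
  forall i : int, (`|i| <= N)%N -> x i = y i.

(* Continuity of a map S^Z -> T^Z for the product topologies. *)
Definition conf_continuous (S T : Type) (f : conf S -> conf T) : Prop :=
  forall (x : conf S) (M : nat), exists N : nat,
    forall y, agree N x y -> agree M (f x) (f y).

Definition int_continuous (S : Type) (c : conf S -> int) : Prop :=
  forall x : conf S, exists N : nat, forall y, agree N x y -> c y = c x.

Definition homeomorphism (S : Type) (f : conf S -> conf S) : Prop :=
  conf_continuous f /\
  exists g : conf S -> conf S, cancel f g /\ cancel g f /\ conf_continuous g.

Definition is_cocycle (S : Type) (f : conf S -> conf S) (c : conf S -> int) :=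
  forall x, f x = shift (c x) x.

Definition TFG (S : Type) : set (endo S) :=
  fun f => homeomorphism f /\ exists c, int_continuous c /\ is_cocycle f c.

Definition subgroup_TFG (S : Type) (G : set (endo S)) : Prop :=
  G `<=` @TFG S /\ G id /\
  (forall f g, G f -> G g -> G (f \o g)) /\
  (forall f, G f -> exists g, G g /\ cancel f g /\ cancel g f).

Definition cocycles_of (S : Type) (G : set (endo S))
  (c : endo S -> conf S -> int) : Prop :=
  forall g, G g -> int_continuous (c g) /\ is_cocycle g (c g).

(* Support of a map beta : G -> A (maps are total, with support in G). *)
Definition supp (T : Type) (A : zmodType) (b : T -> A) : set T :=
  [set g | b g != 0].

Definition move_faithful (A : finZmodType) (S : Type)
  (G : set (endo S)) (c : endo S -> conf S -> int) : Prop :=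
  forall beta : endo S -> A,
    supp beta `<=` G -> finite_set (supp beta) -> supp beta != set0 ->
    exists (x : conf S) (gamma : int -> {additive A -> A}),
      \sum_(g \in G) (gamma (c g x)) (beta g) != 0.

Definition finv (S : Type) (g : conf S -> conf S) : conf S -> conf S :=
  epsilon (inhabits id) (fun k => cancel g k /\ cancel k g).

Definition wreath_carrier (A : zmodType) (S : Type) :=
  ((endo S -> A) * endo S)%type.

Definition in_wreath (A : zmodType) (S : Type) (G : set (endo S))
  (w : wreath_carrier A S) : Prop :=
  G w.2 /\ supp w.1 `<=` G /\ finite_set (supp w.1).

(* (f1, g1)(f2, g2) = (f1 + g1.f2, g1 g2), with (g.f)(h) = f(g^-1 h). *)
Definition wmul (A : zmodType) (S : Type) (w1 w2 : wreath_carrier A S)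
  : wreath_carrier A S :=
  (fun h : endo S => w1.1 h + w2.1 (finv w1.2 \o h : endo S), w1.2 \o w2.2).

(* Main.v *)
Require Import Defs.
From HB Require Import structures.
From mathcomp Require Import all_boot all_order all_algebra.
From mathcomp Require Import boolp classical_sets functions cardinality fsbigop.
From mathcomp Require Import finmap.
From mathcomp Require Import zify ring lra.
From Stdlib Require Import ClassicalEpsilon.
Set Implicit Arguments. Unset Strict Implicit. Unset Printing Implicit Defensive.
Import Order.TTheory GRing.Theory Num.Theory.
Local Open Scope classical_set_scope.
Local Open Scope ring_scope.

Module P1.


Lemma shiftS (S : Type) (a b : int) (x : conf S) : shift a (shift b x) = shift (b + a) x.
Proof. by apply: funext => i; rewrite /shift; congr (x _); ring. Qed.

Lemma shift0 (S : Type) (x : conf S) : shift 0 x = x.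
Proof. by apply: funext => i; rewrite /shift addr0. Qed.

Definition aperiodic (S : Type) (x : conf S) := forall k, shift k x = x -> k = 0.

Lemma aper_eq (S : Type) (x : conf S) a b : aperiodic x -> shift a x = shift b x -> a = b.
Proof.
move=> ap e; have : shift (- b) (shift a x) = shift (- b) (shift b x) by rewrite e.
rewrite !shiftS subrr shift0 => /ap /eqP; rewrite subr_eq0 => /eqP //.
Qed.

Lemma agree_mono (S : Type) (N M : nat) (x y : conf S) : (M <= N)%N -> agree N x y -> agree M x y.
Proof. by move=> le h i hi; apply: h; apply: leq_trans le. Qed.

Definition ext (S : Type) (a b : S) (N : nat) (x : conf S) : conf S :=
  fun i => if (`|i| <= N)%N then x i else if i == (N.+1)%:Z then a else b.

Lemma ext_agree (S : Type) (a b : S) N x : agree N x (ext a b N x).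
Proof. by move=> i hi; rewrite /ext hi. Qed.

Lemma ext_aper (S : eqType) (a b : S) N x : a != b -> aperiodic (ext a b N x).
Proof.
move=> ab k e.
case: (ltrgtP k 0) => // hk.
- have := congr1 (fun f => f ((N.+1)%:Z - k)) e; rewrite /shift /ext subrK.
  have -> : (`|((N.+1)%:Z - k)%R| <= N)%N = false by apply/negbTE; lia.
  have -> : ((N.+1)%:Z - k == (N.+1)%:Z) = false by apply/negbTE; lia.
  have -> : (`|(N.+1)%:Z| <= N)%N = false by apply/negbTE; lia.
  rewrite eqxx => eb; by rewrite eb eqxx in ab.
- have := congr1 (fun f => f ((N.+1)%:Z)) e; rewrite /shift /ext.
  have -> : (`|((N.+1)%:Z + k)%R| <= N)%N = false by apply/negbTE; lia.
  have -> : ((N.+1)%:Z + k == (N.+1)%:Z) = false by apply/negbTE; lia.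
  have -> : (`|(N.+1)%:Z| <= N)%N = false by apply/negbTE; lia.
  rewrite eqxx => eb; by rewrite eb eqxx in ab.
Qed.

Lemma alphabet_two (S : finType) : alphabet S -> exists a b : S, a != b.
Proof.
rewrite /alphabet => h; apply: NNPP => hn.
have : (#|S| <= 1)%N; last by rewrite leqNgt h.
apply/card_le1_eqP => a b _ _; case: (eqVneq a b) => // nab; exfalso; apply: hn; by exists a, b.
Qed.

End P1.
Import P1.

Module P2.


Notation dfinv := Defs.finv.

Lemma finv_uniq (S : Type) (g k : conf S -> conf S) :
  cancel g k -> cancel k g -> dfinv g = k.
Proof.
move=> gk kg; rewrite /Defs.finv.
have [k0g gk0] := @epsilon_spec _ (inhabits id) (fun k => cancel g k /\ cancel k g)
  (ex_intro _ k (conj gk kg)).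
apply: funext => x; by rewrite -{1}(kg x) k0g.
Qed.

Lemma finv_spec (S : Type) (g k : conf S -> conf S) :
  cancel g k -> cancel k g -> cancel g (dfinv g) /\ cancel (dfinv g) g.
Proof. by move=> gk kg; rewrite (finv_uniq gk kg). Qed.

Section Grp.
Variables (Gam : finType) (G : set (endo Gam)) (hG : subgroup_TFG G)
  (c : endo Gam -> conf Gam -> int) (hc : cocycles_of G c) (hGam : alphabet Gam).

Lemma G_id : G id. Proof. by case: hG => _ []. Qed.
Lemma G_comp g h : G g -> G h -> G (g \o h). Proof. by case: hG => _ [_ []] + _; apply. Qed.

Lemma G_inv g : G g -> exists g', [/\ G g', cancel g g', cancel g' g & dfinv g = g'].
Proof.
case: hG => _ [_ [_ hi]] /hi [g' [Gg' [c1 c2]]].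
by exists g'; split => //; apply: finv_uniq.
Qed.

Lemma G_finv g : G g -> G (dfinv g).
Proof. by case/G_inv => g' [? _ _ ->]. Qed.

Lemma finvK1 g : G g -> cancel g (dfinv g).
Proof. by case/G_inv => g' [_ ? _ ->]. Qed.
Lemma finvK2 g : G g -> cancel (dfinv g) g.
Proof. by case/G_inv => g' [_ _ ? ->]. Qed.

Lemma finv_finv g : G g -> dfinv (dfinv g) = g.
Proof. by move=> Gg; apply: finv_uniq; [apply: finvK2 | apply: finvK1]. Qed.

Lemma finv_comp g h : G g -> G h -> dfinv (g \o h) = dfinv h \o dfinv g.
Proof.
move=> Gg Gh; apply: finv_uniq => x /=.
- by rewrite finvK1 // finvK1.
- by rewrite finvK2 // finvK2.
Qed.

Lemma G_cont g : G g -> conf_continuous g.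
Proof. by case: hG => + _ => sub /sub [[]]. Qed.

Lemma cocycle g h u : G g -> G h -> c (g \o h) u = c g (h u) + c h u.
Proof.
move=> Gg Gh.
have Ggh := G_comp Gg Gh.
have [c1 e1] := hc Ggh; have [c2 e2] := hc Gg; have [c3 e3] := hc Gh.
have [N1 h1] := c1 u; have [N2 h2] := c2 (h u); have [N3 h3] := c3 u.
have [N4 h4] := G_cont Gh u N2.
have [a [b ab]] := alphabet_two hGam.
pose N := maxn N1 (maxn N3 N4).
pose u' := ext a b N u.
have ap : aperiodic u' by apply: ext_aper.
have ag : agree N u u' by apply: ext_agree.
have q1 : c (g \o h) u' = c (g \o h) u by apply: h1; apply: (agree_mono _ ag); rewrite /N; lia.
have q3 : c h u' = c h u by apply: h3; apply: (agree_mono _ ag); rewrite /N; lia.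
have q2 : c g (h u') = c g (h u) by apply: h2; apply: h4; apply: (agree_mono _ ag); rewrite /N; lia.
rewrite -q1 -q2 -q3; apply: (aper_eq ap).
by rewrite -e1 /= [c g _ + _]addrC -shiftS -e3 -e2.
Qed.

Lemma c_id u : c id u = 0.
Proof.
have := cocycle u G_id G_id => /= /eqP; rewrite -subr_eq subrr eq_sym => /eqP //.
Qed.
End Grp.

End P2.
Import P2.

Module P3.


Section Nav.
Variables (NN : nat) (L : Type) (lab : L -> nat).
Implicit Types x y : conf L.

Definition validb x (p : int) : bool := [forall j : 'I_NN, lab (x (p + (nat_of_ord j)%:Z)) == j].

Definition site := (int * bool)%type.

Definition next x (s : site) : site :=
  let (p, l) := s in
  if l then (if validb x (p - NN%:Z) then (p - NN%:Z, true) else (p, false))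
  else (if validb x (p + NN%:Z) then (p + NN%:Z, false) else (p, true)).

Definition prev x (s : site) : site :=
  let (p, l) := s in
  if l then (if validb x (p + NN%:Z) then (p + NN%:Z, true) else (p, false))
  else (if validb x (p - NN%:Z) then (p - NN%:Z, false) else (p, true)).

Definition nxt x (k : int) (s : site) : site :=
  if 0 <= k then iter (absz k) (next x) s else iter (absz k) (prev x) s.

Lemma next_valid x (s : site) : validb x s.1 -> validb x (next x s).1.
Proof. by case: s => p [] /= v; [case: ifP | case: ifP]. Qed.

Lemma prev_valid x (s : site) : validb x s.1 -> validb x (prev x s).1.
Proof. by case: s => p [] /= v; [case: ifP | case: ifP]. Qed.

Lemma prev_next x (s : site) : validb x s.1 -> prev x (next x s) = s.
Proof.
case: s => p [] /= v.
- case: ifP => h /=; last by rewrite h.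
  by rewrite subrK v.
- case: ifP => h /=; last by rewrite h.
  by rewrite addrK v.
Qed.

Lemma next_prev x (s : site) : validb x s.1 -> next x (prev x s) = s.
Proof.
case: s => p [] /= v.
- case: ifP => h /=; last by rewrite h.
  by rewrite addrK v.
- case: ifP => h /=; last by rewrite h.
  by rewrite subrK v.
Qed.

Lemma iter_valid x (f : site -> site) m (s : site) : (forall s : site, validb x s.1 -> validb x (f s).1) ->
  validb x s.1 -> validb x (iter m f s).1.
Proof. by move=> hf v; elim: m => //= m ih; apply: hf. Qed.

Lemma nxt_valid x k (s : site) : validb x s.1 -> validb x (nxt x k s).1.
Proof.
by rewrite /nxt; case: ifP => _ v; apply: iter_valid => // *; [apply: next_valid | apply: prev_valid].
Qed.

Lemma nxt0 x s : nxt x 0 s = s.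
Proof. by []. Qed.

Lemma nxtS x k (s : site) : validb x s.1 -> nxt x (k + 1) s = next x (nxt x k s).
Proof.
move=> v; rewrite /nxt.
case: (lerP 0 k) => hk.
  have -> : (0 <= k + 1) = true by apply/idP; lia.
  have -> : (absz (k + 1)) = ((absz k)).+1 by lia.
  by [].
case: (eqVneq k (-1)) => [->|hk1].
  by rewrite /= next_prev.
have -> : (0 <= k + 1) = false by apply/negbTE; lia.
have -> : (absz k) = ((absz (k + 1))).+1 by lia.
rewrite iterS next_prev //; apply: iter_valid => // *; exact: prev_valid.
Qed.

Lemma nxtB x k (s : site) : validb x s.1 -> nxt x (k - 1) s = prev x (nxt x k s).
Proof.
move=> v; have -> : nxt x k s = nxt x ((k - 1) + 1) s by rewrite subrK.
by rewrite nxtS // prev_next //; apply: nxt_valid.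
Qed.

Lemma nxtD x a b (s : site) : validb x s.1 -> nxt x (a + b) s = nxt x a (nxt x b s).
Proof.
move=> v; have vb := nxt_valid b v.
elim/int_rec: a.
- by rewrite add0r.
- move=> m ih; have -> : (m.+1)%:Z = m%:Z + 1 by lia.
  rewrite addrAC !nxtS //.
  by rewrite ih.
- move=> m ih; have -> : - (m.+1)%:Z = - m%:Z - 1 by lia.
  rewrite addrAC !nxtB //; by rewrite ih.
Qed.

Lemma nxt1 x s : nxt x 1 s = next x s. Proof. by []. Qed.


Definition sh (k : int) (s : site) : site := (s.1 + k, s.2).

Lemma validb_shift x k p : validb (shift k x) p = validb x (p + k).
Proof. by apply: eq_forallb => j; rewrite /shift addrAC. Qed.

Lemma next_shift x k s : sh k (next (shift k x) s) = next x (sh k s).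
Proof.
case: s => p [] /=; rewrite !validb_shift.
- have -> : p - NN%:Z + k = p + k - NN%:Z by ring.
  by case: ifP => h; rewrite /sh /=; congr pair; ring.
- have -> : p + NN%:Z + k = p + k + NN%:Z by ring.
  by case: ifP => h; rewrite /sh /=; congr pair; ring.
Qed.

Lemma prev_shift x k s : sh k (prev (shift k x) s) = prev x (sh k s).
Proof.
case: s => p [] /=; rewrite !validb_shift.
- have -> : p + NN%:Z + k = p + k + NN%:Z by ring.
  by case: ifP => h; rewrite /sh /=; congr pair; ring.
- have -> : p - NN%:Z + k = p + k - NN%:Z by ring.
  by case: ifP => h; rewrite /sh /=; congr pair; ring.
Qed.

Lemma iter_conj (f g : site -> site) (h : site -> site) m s :
  (forall s, h (f s) = g (h s)) -> h (iter m f s) = iter m g (h s).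
Proof. by move=> e; elim: m => //= m ih; rewrite e ih. Qed.

Lemma nxt_shift x k m s : sh k (nxt (shift k x) m s) = nxt x m (sh k s).
Proof.
by rewrite /nxt; case: ifP => _; apply: iter_conj => ?; [apply: next_shift | apply: prev_shift].
Qed.

Lemma validb_loc x y R p : agree R x y -> (`|p| + NN <= R)%N -> validb x p = validb y p.
Proof.
move=> ag hp; apply: eq_forallb => j; rewrite ag //.
have := ltn_ord j; lia.
Qed.

Lemma next_loc x y R (s : site) : agree R x y -> (`|s.1| + 2 * NN <= R)%N -> next x s = next y s.
Proof.
case: s => p [] /= ag hp.
- rewrite (validb_loc (p := p - NN%:Z) ag) //; lia.
- rewrite (validb_loc (p := p + NN%:Z) ag) //; lia.
Qed.

Lemma prev_loc x y R (s : site) : agree R x y -> (`|s.1| + 2 * NN <= R)%N -> prev x s = prev y s.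
Proof.
case: s => p [] /= ag hp.
- rewrite (validb_loc (p := p + NN%:Z) ag) //; lia.
- rewrite (validb_loc (p := p - NN%:Z) ag) //; lia.
Qed.

Lemma next_bnd x (s : site) : (`|(next x s).1 - s.1| <= NN)%N.
Proof. case: s => p [] /=; case: ifP => _ /=; lia. Qed.

Lemma prev_bnd x (s : site) : (`|(prev x s).1 - s.1| <= NN)%N.
Proof. case: s => p [] /=; case: ifP => _ /=; lia. Qed.

Lemma iter_loc (f g : site -> site) R m s :
  (forall s, (`|s.1| + 2 * NN <= R)%N -> f s = g s) ->
  (forall s, (`|(f s).1 - s.1| <= NN)%N) ->
  (`|s.1| + NN * m + 2 * NN <= R)%N ->
  iter m f s = iter m g s /\ (`|(iter m f s).1 - s.1| <= NN * m)%N.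
Proof.
move=> efg bf; elim: m => [|m ih] hR /=; first by split => //; lia.
have [e1 b1] : iter m f s = iter m g s /\ (`|(iter m f s).1 - s.1| <= NN * m)%N.
  by apply: ih; lia.
split; first by rewrite -e1; apply: efg; lia.
have := bf (iter m f s); lia.
Qed.

Lemma nxt_loc x y R k (s : site) : agree R x y ->
  (`|s.1| + NN * `|k| + 2 * NN <= R)%N -> nxt x k s = nxt y k s.
Proof.
move=> ag hR; rewrite /nxt; case: ifP => _.
- by case: (iter_loc (f := next x) (g := next y) (m := `|k|%N) (s := s) (@next_loc x y R ^~ ag) (next_bnd x) hR).
- by case: (iter_loc (f := prev x) (g := prev y) (m := `|k|%N) (s := s) (@prev_loc x y R ^~ ag) (prev_bnd x) hR).
Qed.

Lemma iter_bnd (f : site -> site) m s :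
  (forall s, (`|(f s).1 - s.1| <= NN)%N) -> (`|(iter m f s).1 - s.1| <= NN * m)%N.
Proof.
move=> bf; elim: m => [|m ih] /=; first lia.
have := bf (iter m f s); lia.
Qed.

Lemma nxt_bnd x k (s : site) : (`|(nxt x k s).1 - s.1| <= NN * `|k|)%N.
Proof.
by rewrite /nxt; case: ifP => _; apply: iter_bnd => ?; [apply: next_bnd | apply: prev_bnd].
Qed.

End Nav.

End P3.
Import P3.

Module P4.


Section Model.
Variables (A : finZmodType) (hA : (1 < #|A|)%N) (Gam : finType) (hGam : alphabet Gam)
  (G : set (endo Gam)) (hG : subgroup_TFG G)
  (c : endo Gam -> conf Gam -> int) (hc : cocycles_of G c).

Definition nA := #|A|.
Definition NN := (2 * nA)%N.
Definition Lam := ('I_NN * (Gam * bool))%type.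
Definition labL (a : Lam) : nat := a.1.
Implicit Types x y : conf Lam.

Notation valid := (validb NN labL).
Notation nextL := (next NN labL).
Notation prevL := (prev NN labL).
Notation nxtL := (nxt NN labL).

Definition lab x i := labL (x i).
Definition base (s : site) : int := s.1 + (if s.2 then nA%:Z else 0).
Definition rg x (s : site) : conf Gam := fun i => (x (base (nxtL x i s))).2.1.
Definition zs x (s : site) : bool := (x (base s)).2.2.
Definition act x (g : endo Gam) (s : site) : site := nxtL x (c g (rg x s)) s.
Definition F x (f : endo Gam -> A) (t : site) : A :=
  \sum_(h \in G) (if zs x (act x (Defs.finv h) t) then f h else 0).
Definition alive x i := valid x (i - (lab x i)%:Z).
Definition site_of x i : site := (i - (lab x i)%:Z, (nA <= lab x i)%N).
Definition sub_of x i : A := nth 0 (enum A) (if (nA <= lab x i)%N then lab x i - nA else lab x i)%N.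
Definition cell (s : site) (a : A) : int := base s + (index a (enum A))%:Z.
Definition P x (w : wreath_carrier A Gam) (i : int) : int :=
  if alive x i then (let s := act x w.2 (site_of x i) in cell s (sub_of x i + F x w.1 s))
  else i.
Definition dm (w : wreath_carrier A Gam) x : int := P x w 0.

Lemma sizeA : size (enum A) = nA. Proof. by rewrite -cardE. Qed.

Lemma rg_nxt x s k : valid x s.1 -> rg x (nxtL x k s) = shift k (rg x s).
Proof.
move=> v; apply: funext => i; by rewrite /rg /shift -nxtD.
Qed.

Lemma act_valid x g s : valid x s.1 -> valid x (act x g s).1.
Proof. exact: nxt_valid. Qed.

Lemma act_comp x g h s : G g -> G h -> valid x s.1 -> act x (g \o h) s = act x g (act x h s).
Proof.
move=> Gg Gh v; rewrite /act (cocycle hG hc hGam _ Gg Gh) rg_nxt // nxtD //.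
have [_ e] := hc Gh; by rewrite -e.
Qed.

Lemma act_id x s : act x id s = s.
Proof. by rewrite /act (c_id hG hc hGam). Qed.

Lemma lab_valid x p (j : nat) : valid x p -> (j < NN)%N -> lab x (p + j%:Z) = j.
Proof.
move=> /forallP v hj; have := v (Ordinal hj); by move/eqP.
Qed.

Lemma decode x s a : valid x s.1 ->
  [/\ alive x (cell s a), site_of x (cell s a) = s & sub_of x (cell s a) = a].
Proof.
case: s => p l /= v.
have ia : (index a (enum A) < nA)%N by rewrite -sizeA index_mem mem_enum.
have na : nth 0 (enum A) (index a (enum A)) = a by rewrite nth_index // mem_enum.
move: ia na; rewrite /cell; set k := index a (enum A) => ia na.
have hl : lab x (base (p, l) + k%:Z) = ((if l then nA else 0) + k)%N.
  rewrite /base /= -addrA.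
  have -> : ((if l then nA%:Z else 0) + k%:Z) = ((if l then nA else 0) + k)%N%:Z.
    by case: l.
  apply: lab_valid => //; rewrite /NN; case: l; lia.
have e1 : base (p, l) + k%:Z - (lab x (base (p, l) + k%:Z))%:Z = p.
  rewrite hl /base /=; clear hl; case: l => /=; lia.
split.
- by rewrite /alive e1.
- rewrite /site_of e1 hl; congr pair; clear hl e1; case: l => /=; [apply/idP | apply/negbTE]; lia.
- rewrite /sub_of hl.
  have -> : (if (nA <= (if l then nA else 0) + k)%N
     then ((if l then nA else 0) + k - nA)%N
     else ((if l then nA else 0) + k)%N) = k.
    by clear hl e1; case: l; case: ifP => /=; lia.
  by [].
Qed.

Lemma encode x i : alive x i -> valid x (site_of x i).1 /\ cell (site_of x i) (sub_of x i) = i.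
Proof.
move=> al; split => //.
have hl : (lab x i < NN)%N by rewrite /lab /labL ltn_ord.
rewrite /cell /base /sub_of /=.
move: hl; set j := lab x i => hl.
set k := (if (nA <= j)%N then (j - nA)%N else j).
have hk : (k < size (enum A))%N by rewrite sizeA /k; case: ifP; rewrite /NN in hl; lia.
rewrite index_uniq ?enum_uniq // /k; case: ifP => /=; lia.
Qed.


Lemma base_sh k s : base (sh k s) = base s + k.
Proof. by rewrite /base /=; ring. Qed.

Lemma rg_shift x k s : rg (shift k x) s = rg x (sh k s).
Proof.
apply: funext => i; rewrite /rg -nxt_shift base_sh //.
Qed.

Lemma zs_shift x k s : zs (shift k x) s = zs x (sh k s).
Proof. by rewrite /zs base_sh. Qed.

Lemma act_shift x k g s : sh k (act (shift k x) g s) = act x g (sh k s).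
Proof. by rewrite /act nxt_shift rg_shift. Qed.

Lemma F_shift x k f s : F (shift k x) f s = F x f (sh k s).
Proof.
apply: eq_fsbigr => h _; by rewrite zs_shift act_shift.
Qed.

Lemma alive_shift x k i : alive (shift k x) i = alive x (i + k).
Proof. by rewrite /alive validb_shift /lab /shift addrAC. Qed.

Lemma site_of_shift x k i : sh k (site_of (shift k x) i) = site_of x (i + k).
Proof. by rewrite /site_of /sh /lab /shift /=; congr pair; ring. Qed.

Lemma sub_of_shift x k i : sub_of (shift k x) i = sub_of x (i + k).
Proof. by []. Qed.

Lemma cell_sh k s a : cell (sh k s) a = cell s a + k.
Proof. by rewrite /cell base_sh; ring. Qed.

Lemma P_shift x k w i : P (shift k x) w i + k = P x w (i + k).
Proof.
rewrite /P alive_shift; case: ifP => // al.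
by rewrite -cell_sh act_shift site_of_shift F_shift act_shift site_of_shift sub_of_shift.
Qed.


Lemma fsum_restr (T : choiceType) (V : zmodType) (D S : set T) (phi : T -> V) :
  (forall h, D h -> ~ S h -> phi h = 0) -> \sum_(h \in D) phi h = \sum_(h \in D `&` S) phi h.
Proof.
move=> z; rewrite (fsbig_widen (D `&` S) D) //.
by move=> h [Dh nh] /=; apply: z => // Sh; apply: nh.
Qed.

Lemma F_add x (f1 f2 : endo Gam -> A) t :
  finite_set (supp f1) -> finite_set (supp f2) ->
  F x (fun h => f1 h + f2 h) t = F x f1 t + F x f2 t.
Proof.
move=> fin1 fin2.
pose S := supp f1 `|` supp f2.
have finS : finite_set S by rewrite /S finite_setU.
have z1 : forall f : endo Gam -> A, (forall h, ~ S h -> f h = 0) ->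
   F x f t = \sum_(h \in G `&` S) (if zs x (act x (dfinv h) t) then f h else 0).
  move=> f hf; apply: fsum_restr => h _ nS; by rewrite hf // if_same.
rewrite !z1.
- rewrite (eq_fsbigr (fun h : endo Gam => (if zs x (act x (dfinv h) t) then f1 h else 0) +
        (if zs x (act x (dfinv h) t) then f2 h else 0))); last first.
    by move=> h _; case: ifP; rewrite ?addr0.
  by rewrite fsbig_split //; apply: finite_setIr.
- by move=> h nS; apply/eqP; apply: contrapT => /negP ne; apply: nS; right.
- by move=> h nS; apply/eqP; apply: contrapT => /negP ne; apply: nS; left.
- move=> h nS.
  have e1 : f1 h = 0 by apply/eqP; apply: contrapT => /negP ne; apply: nS; left.
  have e2 : f2 h = 0 by apply/eqP; apply: contrapT => /negP ne; apply: nS; right.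
  by rewrite e1 e2 addr0.
Qed.

Lemma bij_left g : G g -> set_bij G G (fun h : endo Gam => g \o h).
Proof.
move=> Gg; split.
- by move=> h Gh; apply: G_comp.
- move=> h1 h2 _ _ e; apply: funext => u.
  have := congr1 (fun k => dfinv g (k u)) e; by rewrite /= !(finvK1 hG Gg).
- move=> h Gh; exists (dfinv g \o h); first by apply: G_comp => //; apply: G_finv.
  by apply: funext => u /=; rewrite (finvK2 hG Gg).
Qed.

Lemma F_act x g f t : G g -> valid x t.1 ->
  F x (fun h => f (dfinv g \o h)) (act x g t) = F x f t.
Proof.
move=> Gg vt; rewrite /F (reindex_fsbig (fun h => g \o h) G G _ (bij_left Gg)).
apply: eq_fsbigr => h /set_mem Gh.
have Gfg := G_finv hG Gg; have Gfh := G_finv hG Gh.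
have e1 : dfinv g \o g = id by apply: funext => u /=; rewrite (finvK1 hG Gg).
have e2 : dfinv g \o (g \o h) = h by apply: funext => u /=; rewrite (finvK1 hG Gg).
rewrite (finv_comp hG Gg Gh) e2 (act_comp Gfh Gfg); last by apply: act_valid.
by rewrite -(act_comp Gfg Gg) // e1 act_id.
Qed.


Lemma supp_act_finite g (f : endo Gam -> A) : G g -> finite_set (supp f) ->
  finite_set (supp (fun h : endo Gam => f (dfinv g \o h))).

Proof.
move=> Gg fin; apply: (sub_finite_set _ (finite_image (fun h : endo Gam => g \o h) fin)).
move=> h hs; exists (dfinv g \o h) => //.
by apply: funext => u /=; rewrite (finvK2 hG Gg).
Qed.

Lemma P_comp x w1 w2 i : in_wreath G w1 -> in_wreath G w2 ->
  P x (wmul w1 w2) i = P x w1 (P x w2 i).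
Proof.
case: w1 => f1 g1; case: w2 => f2 g2 [/= Gg1 [s1 fin1]] [/= Gg2 [s2 fin2]].
rewrite /P /=; case: ifP => al; last by rewrite al.
have [vs _] := encode al.
set s := site_of x i; set a := sub_of x i.
set t2 := act x g2 s.
have vt2 : valid x t2.1 by apply: act_valid.
have [al2 si2 su2] := decode (a + F x f2 t2) vt2.
rewrite al2 si2 su2 (act_comp Gg1 Gg2 vs) -/t2.
rewrite F_add //; last by apply: supp_act_finite.
by rewrite F_act // [F x f1 _ + _]addrC addrA.
Qed.

Lemma dm_comp x w1 w2 : in_wreath G w1 -> in_wreath G w2 ->
  dm (wmul w1 w2) x = dm w2 x + dm w1 (shift (dm w2 x) x).
Proof.
move=> h1 h2; rewrite /dm P_comp //.
have := P_shift x (dm w2 x) w1 0; rewrite add0r /dm => <-; ring.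
Qed.

End Model.

End P4.
Import P4.

Module P5.


Lemma exists_bound (T : eqType) (Q : T -> nat -> Prop) (l : seq T) :
  (forall h R R', (R <= R')%N -> Q h R -> Q h R') ->
  (forall h, h \in l -> exists R, Q h R) -> exists R, forall h, h \in l -> Q h R.
Proof.
move=> mono; elim: l => [|h l ih] hl; first by exists 0%N.
have [R1 q1] := hl h (mem_head _ _).
have [R2 q2] : exists R, forall h, h \in l -> Q h R.
  by apply: ih => h' h'l; apply: hl; rewrite inE h'l orbT.
exists (maxn R1 R2) => h'; rewrite inE => /orP [/eqP ->|h'l].
- by apply: (mono _ R1) => //; apply: leq_maxl.
- by apply: (mono _ R2) => //; [apply: leq_maxr | apply: q2].
Qed.

Section Cont.
Variables (A : finZmodType) (hA : (1 < #|A|)%N) (Gam : finType) (hGam : alphabet Gam)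
  (G : set (endo Gam)) (hG : subgroup_TFG G)
  (c : endo Gam -> conf Gam -> int) (hc : cocycles_of G c).
Implicit Types x y : conf (Lam A Gam).

Notation valid := (validb (NN A) (@labL A Gam)).
Notation nxtL := (nxt (NN A) (@labL A Gam)).
Notation rg := (@rg A Gam).
Notation act := (@act A Gam c).
Notation F := (@F A Gam G c).
Notation P := (@P A Gam G c).
Notation dm := (@dm A Gam G c).
Notation base := (@base A).

Lemma ar1 (p q b : int) (N i M R : nat) : (`|b| <= N)%N -> (`|(p - q)%R| <= N * i)%N -> (N * i <= N * M)%N ->
  (`|q| + N * M + 3 * N <= R)%N -> (`|(p + b)%R| <= R)%N.
Proof. lia. Qed.

Lemma rg_loc x y R M (s : site) : agree R x y ->
  (`|s.1| + NN A * M + 3 * NN A <= R)%N -> agree M (rg x s) (rg y s).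
Proof.
move=> ag hR i hi; rewrite /P4.rg.
have hm : (NN A * `|i| <= NN A * M)%N by rewrite leq_mul2l hi orbT.
rewrite -(nxt_loc (@labL A Gam) (R := R) (k := i) (s := s) ag); last by lia.
congr (_.2.1); apply: ag; have := nxt_bnd (NN A) (@labL A Gam) x i s.
rewrite /base; case: (nxt _ _ _ _ _) => p l /= hb.
apply: (ar1 (q := s.1) (N := NN A) (i := `|i|%N) (M := M)) => //.
by case: l; rewrite /NN /nA; lia.
Qed.

Lemma act_loc x g (s : site) : G g -> exists R, forall y, agree R x y -> act y g s = act x g s.
Proof.
move=> Gg; have [cg _] := hc Gg.
have [M hM] := cg (rg x s).
set k := c g (rg x s).
exists (`|s.1| + NN A * (maxn M `|k|) + 3 * NN A)%N => y ag.
have e : c g (rg y s) = k.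
  apply: hM; apply: (rg_loc ag); rewrite /NN; nia.
rewrite /P4.act e; symmetry; apply: (nxt_loc (@labL A Gam) (R := (`|s.1| + NN A * (maxn M `|k|) + 3 * NN A)%N)) => //.
rewrite /NN; nia.
Qed.

Lemma zs_loc x y R (s : site) : agree R x y -> (`|base s| <= R)%N -> zs x s = zs y s.
Proof. by move=> ag h; rewrite /zs ag. Qed.

Lemma F_loc x (f : endo Gam -> A) (t : site) : supp f `<=` G -> finite_set (supp f) ->
  exists R, forall y, agree R x y -> F y f t = F x f t.
Proof.
move=> sG fin.
have [R hR] : exists R, forall h : endo Gam, h \in fset_set (supp f) -> forall y, agree R x y ->
    zs y (act y (dfinv h) t) = zs x (act x (dfinv h) t).
  apply: exists_bound.
    by move=> h R1 R2 le q y ag; apply: q; apply: agree_mono ag.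
  move=> h; rewrite in_fset_set // => /set_mem /sG Gh.
  have [R1 h1] := act_loc x t (G_finv hG Gh).
  exists (maxn R1 `|base (act x (dfinv h) t)|) => y ag.
  rewrite h1; last by apply: agree_mono ag; apply: leq_maxl.
  symmetry; apply: (zs_loc ag); apply: leq_maxr.
exists R => y ag; apply: eq_fsbigr => h _.
case: (eqVneq (f h) 0) => [->|nz]; first by rewrite !if_same.
rewrite hR //; rewrite in_fset_set //; apply: mem_set; exact: nz.
Qed.

Lemma dm_loc (w : wreath_carrier A Gam) : in_wreath G w -> int_continuous (dm w).
Proof.
case: w => f g [/= Gg [sG fin]] x.
rewrite /P4.dm /P4.P /=.
case al : (alive x 0).
- set s := site_of x 0.
  have [R1 h1] := act_loc x s Gg.
  have [R2 h2] := F_loc x (act x g s) sG fin.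
  exists (maxn (maxn R1 R2) (3 * NN A)) => y ag.
  have ag1 : agree R1 x y by apply: agree_mono ag; lia.
  have ag2 : agree R2 x y by apply: agree_mono ag; lia.
  have ag3 : agree (3 * NN A) x y by apply: agree_mono ag; lia.
  have el : lab y 0 = lab x 0 by rewrite /lab ag3.
  have es : site_of y 0 = s by rewrite /site_of /s el.
  have esub : sub_of y 0 = sub_of x 0 by rewrite /sub_of el.
  have aly : alive y 0.
    rewrite /alive el -(validb_loc (@labL A Gam) ag3) //.
    have : (lab x 0 < NN A)%N by rewrite /lab /labL ltn_ord.
    lia.
  by rewrite aly es esub h1 // h2.
- exists (3 * NN A)%N => y ag.
  have el : lab y 0 = lab x 0 by rewrite /lab ag.
  have -> : alive y 0 = false.
    rewrite /alive el -(validb_loc (@labL A Gam) ag) //.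
    have : (lab x 0 < NN A)%N by rewrite /lab /labL ltn_ord.
    lia.
  by [].
Qed.

End Cont.

End P5.
Import P5.

Module P6.


Section Wit.
Variables (A : finZmodType) (hA : (1 < #|A|)%N) (Gam : finType) (hGam : alphabet Gam)
  (G : set (endo Gam)) (hG : subgroup_TFG G)
  (c : endo Gam -> conf Gam -> int) (hc : cocycles_of G c).

Notation NN := (NN A).
Notation lb := (@labL A Gam).
Notation valid := (validb NN lb).
Notation nxtL := (nxt NN lb).
Notation rg := (@rg A Gam).
Notation act := (@act A Gam c).
Notation F := (@F A Gam G c).
Notation P := (@P A Gam G c).
Notation dm := (@dm A Gam G c).
Notation base := (@base A).

Lemma NN_gt0 : (0 < NN)%N. Proof. rewrite /NN /nA; lia. Qed.
Lemma NNz_neq0 : (NN%:Z != 0). Proof. have := NN_gt0; lia. Qed.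

Lemma mod_lt (i : int) : (absz (i %% NN%:Z)%Z < NN)%N.
Proof.
have h1 := modz_ge0 i NNz_neq0; have h2 := ltz_mod i NNz_neq0.
move: h1 h2; set r := (i %% _)%Z; lia.
Qed.

Definition Xc (u : conf Gam) (v : conf bool) : conf (Lam A Gam) :=
  fun i => (Ordinal (mod_lt i), (u (i %/ NN%:Z)%Z, v (i %/ NN%:Z)%Z)).

Lemma divmod_cell (m : int) (j : nat) : (j < NN)%N ->
  ((m * NN%:Z + j%:Z) %/ NN%:Z)%Z = m /\ ((m * NN%:Z + j%:Z) %% NN%:Z)%Z = j%:Z.
Proof.
move=> hj; split.
- rewrite divzMDl ?NNz_neq0 // divz_small ?addr0 //; apply/andP; split; lia.
- rewrite modzMDl modz_small //; apply/andP; split; lia.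
Qed.

Lemma Xc_cell u v (m : int) (j : nat) : (j < NN)%N ->
  [/\ lab (Xc u v) (m * NN%:Z + j%:Z) = j, ((Xc u v) (m * NN%:Z + j%:Z)).2.1 = u m
    & ((Xc u v) (m * NN%:Z + j%:Z)).2.2 = v m].
Proof.
move=> hj; have [e1 e2] := divmod_cell m hj.
by rewrite /lab /labL /Xc /= e1 e2.
Qed.

Lemma Xc_valid u v (m : int) : valid (Xc u v) (m * NN%:Z).
Proof.
apply/forallP => j; have [e _ _] := Xc_cell u v m (ltn_ord j).
by rewrite -/(lab _ _) e.
Qed.

Lemma Xc_nxt u v (m k : int) : nxtL (Xc u v) k (m * NN%:Z, false) = ((m + k) * NN%:Z, false).
Proof.
have vm := Xc_valid u v m.
elim/int_rec: k.
- by rewrite addr0.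
- move=> k ih; have -> : (k.+1)%:Z = k%:Z + 1 by lia.
  rewrite nxtS // ih /=.
  have -> : (m + k%:Z) * NN%:Z + NN%:Z = (m + (k%:Z + 1)) * NN%:Z by ring.
  by rewrite Xc_valid.
- move=> k ih; have -> : - (k.+1)%:Z = - k%:Z - 1 by lia.
  rewrite nxtB // ih /=.
  have -> : (m + - k%:Z) * NN%:Z - NN%:Z = (m + (- k%:Z - 1)) * NN%:Z by ring.
  by rewrite Xc_valid.
Qed.

Lemma div_cell (m : int) : ((m * NN%:Z) %/ NN%:Z)%Z = m.
Proof. by have := divmod_cell m NN_gt0; rewrite addr0 => -[]. Qed.

Lemma Xc_m u v (m : int) : (Xc u v (m * NN%:Z)).2 = (u m, v m).
Proof.
have [_ e1 e2] := Xc_cell u v m NN_gt0.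
rewrite addr0 in e1 e2; by rewrite -e1 -e2; case: (Xc u v _ ).2.
Qed.

Lemma Xc_rg u v (m : int) : rg (Xc u v) (m * NN%:Z, false) = shift m u.
Proof.
apply: funext => i; rewrite /P4.rg Xc_nxt /base /= addr0 div_cell.
by rewrite /shift addrC.
Qed.

Lemma Xc_zs u v (m : int) : zs (Xc u v) (m * NN%:Z, false) = v m.
Proof. by rewrite /zs /base /= addr0 div_cell. Qed.

Lemma Xc_act u v g (m : int) : act (Xc u v) g (m * NN%:Z, false) = ((m + c g (shift m u)) * NN%:Z, false).
Proof. by rewrite /P4.act Xc_rg Xc_nxt. Qed.


Definition a0 : A := nth 0 (enum A) 0.

Lemma Xc_F u v f (m : int) : F (Xc u v) f (m * NN%:Z, false) =
  \sum_(h \in G) (if v (m + c (dfinv h) (shift m u)) then f h else 0).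
Proof. by apply: eq_fsbigr => h _; rewrite Xc_act Xc_zs. Qed.

Lemma Xc_dm u v f g : dm (f, g) (Xc u v) =
  c g u * NN%:Z + (index (a0 + F (Xc u v) f (c g u * NN%:Z, false)) (enum A))%:Z.
Proof.
have [l0 _ _] := Xc_cell u v 0 NN_gt0.
rewrite mul0r add0r in l0.
have e0 : (0 : int) - (lab (Xc u v) 0)%:Z = 0 * NN%:Z by rewrite l0 mul0r subr0.
rewrite /P4.dm /P4.P /alive e0 Xc_valid /site_of e0 /= l0 /=.
have -> : (nA A <= 0)%N = false by rewrite /nA; lia.
rewrite Xc_act shift0 add0r /sub_of l0.
have -> : (nA A <= 0)%N = false by rewrite /nA; lia.
by rewrite /cell /base /= addr0.
Qed.

Definition delta (k : int) : conf bool := fun m => m == k.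

Lemma Xc_aper u k : aperiodic (Xc u (delta k)).
Proof.
move=> t e.
have e1 : Xc u (delta k) (k * NN%:Z + t) = Xc u (delta k) (k * NN%:Z).
  by have := congr1 (fun y => y (k * NN%:Z)) e; rewrite /shift.
have z1 := congr1 (fun a => a.2.2) e1; rewrite /= div_cell /delta eqxx in z1.
have l1 := congr1 (fun a => nat_of_ord a.1) e1; rewrite /= in l1.
have := divmod_cell k NN_gt0; rewrite addr0 => -[_ m0]; rewrite m0 /= in l1.
set i := k * NN%:Z + t in z1 l1.
have := divz_eq i NN%:Z; move/eqP: z1 => ->.
have hm : (i %% NN%:Z)%Z = 0.
  have := modz_ge0 i NNz_neq0; move: l1; set r := (i %% _)%Z; lia.
rewrite hm addr0 /i => /eqP; rewrite -subr_eq0 => /eqP h.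
move: h; match goal with |- ?g => idtac "GOAL" g end. lia.
Qed.


Lemma group_sum (T : eqType) (l : seq T) (cv : T -> int) (D : T -> A)
  (gam : int -> {additive A -> A}) :
  (forall k, \sum_(h <- l) (if cv h == k then D h else 0) = 0) ->
  \sum_(h <- l) gam (cv h) (D h) = 0.
Proof.
elim: {l}(size l).+1 {-2}l (ltnSn (size l)) => // n ih l hl H.
case: l hl H => [|h0 l'] hl H; first by rewrite big_nil.
set l := h0 :: l' in hl H *.
set k := cv h0.
rewrite (bigID (fun h => cv h == k)) /=.
have -> : \sum_(h <- l | cv h == k) gam (cv h) (D h) = 0.
  rewrite (eq_bigr (fun h => gam k (D h))); last by move=> h /eqP ->.
  rewrite -raddf_sum.
  have -> : \sum_(h <- l | cv h == k) D h = 0 by rewrite big_mkcond H.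
  by rewrite raddf0.
rewrite add0r -big_filter; apply: ih.
  have e : filter (fun h => cv h != k) l = filter (fun h => cv h != k) l'.
    by rewrite /l /= /k eqxx.
  rewrite e size_filter; have := count_size (fun h => cv h != k) l'.
  rewrite /l /= in hl; lia.
move=> k'; rewrite big_filter.
case: (eqVneq k' k) => [->|nk].
  by apply: big1 => h /negbTE ->.
rewrite -[RHS](H k') [RHS](bigID (fun h => cv h == k)) /= [X in _ = X + _]big1 ?add0r //.
by move=> h /eqP ->; rewrite eq_sym (negbTE nk).
Qed.



Lemma cell_inj (a b : int) (i1 i2 : nat) : (i1 < NN)%N -> (i2 < NN)%N ->
  a * NN%:Z + i1%:Z = b * NN%:Z + i2%:Z -> a = b /\ i1 = i2.
Proof.
move=> h1 h2 e.
have [d1 m1] := divmod_cell a h1; have [d2 m2] := divmod_cell b h2.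
split; first by rewrite -d1 e d2.
by apply/eqP; rewrite -eqz_nat -m1 e m2.
Qed.

Lemma index_lt (a : A) : (index a (enum A) < NN)%N.
Proof.
have : (index a (enum A) < size (enum A))%N by rewrite index_mem mem_enum.
rewrite sizeA /NN /nA; lia.
Qed.

Lemma index_inj (a b : A) : index a (enum A) = index b (enum A) -> a = b.
Proof.
move=> e; by rewrite -(nth_index 0 (mem_enum A a)) e nth_index // mem_enum.
Qed.

Lemma bij_finv : set_bij G G (fun h : endo Gam => dfinv h).
Proof.
split.
- by move=> h Gh; apply: G_finv.
- move=> h1 h2 /set_mem G1 /set_mem G2 e; by rewrite -(finv_finv hG G1) e (finv_finv hG G2).
- move=> t Gt; exists (dfinv t); first by apply: G_finv.
  by rewrite (finv_finv hG Gt).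
Qed.

Lemma sum_to_seq (V : zmodType) (D : endo Gam -> A) (phi : endo Gam -> V) :
  supp D `<=` G -> finite_set (supp D) -> (forall h, D h = 0 -> phi h = 0) ->
  \sum_(h \in G) phi h = \sum_(h <- fset_set (supp D)) phi h.
Proof.
move=> sG fin z.
rewrite (fsum_restr (S := supp D)); last first.
  by move=> h _ nS; apply: z; apply/eqP; apply: contrapT => /negP ne; apply: nS.
have -> : G `&` supp D = supp D by apply/seteqP; split => h; [case | move=> sh; split => //; apply: sG].
by rewrite fsbig_finite.
Qed.

Lemma faithful (hmove : move_faithful A G c) w1 w2 : in_wreath G w1 -> in_wreath G w2 ->
  (forall x, shift (dm w1 x) x = shift (dm w2 x) x) -> w1 = w2.
Proof.
case: w1 => f1 g1; case: w2 => f2 g2 [/= Gg1 [s1 fin1]] [/= Gg2 [s2 fin2]] H.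
have E u k : c g1 u = c g2 u /\
   F (Xc u (delta k)) f1 (c g1 u * NN%:Z, false) = F (Xc u (delta k)) f2 (c g1 u * NN%:Z, false).
  have := aper_eq (Xc_aper (u:=u) (k:=k)) (H _); rewrite !Xc_dm.
  case/cell_inj; [exact: index_lt | exact: index_lt | ].
  move=> ec /index_inj /addrI eF; split => //; by rewrite eF ec.
have eg : g1 = g2.
  apply: funext => u; have [_ e1] := hc Gg1; have [_ e2] := hc Gg2.
  by rewrite e1 e2 (E u 0).1.
subst g2; congr pair.
pose D := fun h => f1 h - f2 h.
have finD : finite_set (supp D).
  have finU : finite_set (supp f1 `|` supp f2) by rewrite finite_setU.
  apply: (sub_finite_set _ finU) => h /= hD.
  case: (eqVneq (f1 h) 0) => [e1|]; last by left.
  right; rewrite /supp /=; apply/eqP => e2; move: hD; rewrite /supp /= /D e1 e2 subrr eqxx.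
  by [].
have sD : supp D `<=` G.
  move=> h /= hD; case: (eqVneq (f1 h) 0) => [e1|n1]; last by apply: s1.
  apply: s2; rewrite /supp /=; apply/eqP => e2; move: hD; rewrite /supp /= /D e1 e2 subrr eqxx.
  by [].
have key : forall u0 k, \sum_(h \in G) (if c (dfinv h) u0 == k then D h else 0) = 0.
  move=> u0 k.
  pose u := dfinv g1 u0; pose m := c g1 u.
  have hu : shift m u = u0.
    have [_ e1] := hc Gg1; by rewrite /m -e1 /u (finvK2 hG Gg1).
  have [_ eF] := E u (m + k).
  have eF' : F (Xc u (delta (m + k))) D (m * NN%:Z, false) = 0.
    have ef : f1 = (fun h => f2 h + D h) by apply: funext => h; rewrite /D addrC subrK.
    move: eF; rewrite -/m {1}ef F_add // -[RHS]addr0 => /addrI //.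
  rewrite Xc_F in eF'; rewrite -[RHS]eF'; apply: eq_fsbigr => h _.
  by rewrite hu /delta (inj_eq (addrI m)).
apply: funext => h; apply/eqP; rewrite -subr_eq0; apply/eqP.
apply: contrapT => nz.
have Gh : G h by apply: sD; rewrite /supp /=; apply/eqP.
pose beta := fun t : endo Gam => if `[< G t >] then D (dfinv t) else 0.
have sb : supp beta `<=` G.
  move=> t; rewrite /supp /= /beta; case: asboolP => // _; by rewrite eqxx.
have finb : finite_set (supp beta).
  apply: (sub_finite_set _ (finite_image (fun t : endo Gam => dfinv t) finD)) => t bt.
  have Gt := sb t bt; move: bt; rewrite /supp /= /beta asboolT // => bt.
  by exists (dfinv t) => //; rewrite (finv_finv hG Gt).
have neb : supp beta != set0.
  apply/set0P; exists (dfinv h); rewrite /supp /= /beta asboolT; last by apply: G_finv.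
  by rewrite (finv_finv hG Gh); apply/eqP.
have [x [gam hne]] := hmove beta sb finb neb.
move/negP: hne; apply.
rewrite (eq_fsbigr (fun t : endo Gam => gam (c t x) (D (dfinv t)))); last first.
  by move=> t /set_mem Gt; rewrite /beta asboolT.
rewrite (reindex_fsbig (fun h : endo Gam => dfinv h) G G _ bij_finv).
rewrite (eq_fsbigr (fun h : endo Gam => gam (c (dfinv h) x) (D h))); last first.
  by move=> t /set_mem Gt; rewrite (finv_finv hG Gt).
rewrite (sum_to_seq (D := D)) //; last by move=> t ->; rewrite raddf0.
apply/eqP; apply: group_sum => k.
rewrite -(sum_to_seq (D := D)) //; last by move=> t ->; rewrite if_same.
Qed.


End Wit.

End P6.
Import P6.

Module P7.


Section Lift.
Variables (L Sig : finType) (l0 : L) (hSig : alphabet Sig).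

Definition KL := #|L|.
Definition Kb : int := (KL.+1)%:Z.
Definition BL := {ffun 'I_KL.+1 -> Sig}.

Lemma hle : (KL <= #|{: BL}|)%N.
Proof.
rewrite /BL card_ffun card_ord.
have h2 : (2 <= #|Sig|)%N by exact: hSig.
have h1 : (KL.+1 < 2 ^ KL.+1)%N := ltn_expl KL.+1 (isT : (1 < 2)%N).
have h3 : (2 ^ KL.+1 <= #|Sig| ^ KL.+1)%N by rewrite leq_exp2r.
lia.
Qed.

Definition tau (l : L) : BL := enum_val (widen_ord hle (enum_rank l)).

Lemma tau_inj : injective tau.
Proof.
move=> a b /enum_val_inj /(congr1 val) /= /val_inj; exact: enum_rank_inj.
Qed.

Definition pi (b : BL) : L := if [pick l | tau l == b] is Some l then l else l0.

Lemma pi_tau l : pi (tau l) = l.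
Proof.
rewrite /pi; case: pickP => [l' /eqP /tau_inj //|].
by move=> /(_ l); rewrite eqxx.
Qed.

Definition Pi (y : conf Sig) : conf L :=
  fun i => pi [ffun j : 'I_KL.+1 => y (i * Kb + (nat_of_ord j)%:Z)].

Lemma Pi_shift y k : Pi (shift (k * Kb) y) = shift k (Pi y).
Proof.
apply: funext => i; rewrite /Pi /shift; congr pi; apply/ffunP => j; rewrite !ffunE.
congr y; ring.
Qed.

Lemma Kb_neq0 : Kb != 0. Proof. by rewrite /Kb. Qed.

Definition Piinv (x : conf L) : conf Sig :=
  fun i => tau (x (i %/ Kb)%Z) (inord (absz (i %% Kb)%Z)).

Lemma Pi_Piinv x : Pi (Piinv x) = x.
Proof.
apply: funext => i; rewrite /Pi /Piinv.
rewrite -[RHS]pi_tau; congr pi; apply/ffunP => j; rewrite ffunE.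
have hj := ltn_ord j.
have e1 : ((i * Kb + (nat_of_ord j)%:Z) %/ Kb)%Z = i.
  rewrite divzMDl ?Kb_neq0 // divz_small ?addr0 //; apply/andP; split; rewrite /Kb; lia.
have e2 : ((i * Kb + (nat_of_ord j)%:Z) %% Kb)%Z = (nat_of_ord j)%:Z.
  rewrite modzMDl modz_small //; apply/andP; split; rewrite /Kb; lia.
by rewrite e1 e2 /= inord_val.
Qed.

Lemma Pi_cont (N : nat) y y' : agree (N.+1 * KL.+1) y y' -> agree N (Pi y) (Pi y').
Proof.
move=> ag i hi; rewrite /Pi; congr pi; apply/ffunP => j; rewrite !ffunE.
apply: ag; have hj := ltn_ord j.
have hm : (`|i| * KL.+1 <= N * KL.+1)%N by rewrite leq_mul2r hi orbT.
rewrite /Kb; move: hm hj; set r := nat_of_ord j.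
lia.
Qed.

Lemma shift_cont (S : Type) (d : conf S -> int) : int_continuous d ->
  conf_continuous (fun y => shift (d y) y).
Proof.
move=> hd x M; have [N hN] := hd x.
exists (maxn N (M + `|d x|)) => y ag i hi.
have e : d y = d x by apply: hN; apply: agree_mono ag; lia.
rewrite e /shift; apply: ag; lia.
Qed.

Lemma lift_main (W : Type) (inW : W -> Prop) (mul : W -> W -> W) (e : W) (inv : W -> W)
  (d : W -> conf L -> int) :
  (forall w, inW w -> int_continuous (d w)) ->
  (forall w1 w2, inW w1 -> inW w2 -> forall x, d (mul w1 w2) x = d w2 x + d w1 (shift (d w2 x) x)) ->
  (forall x, d e x = 0) ->
  (forall w, inW w -> inW (inv w) /\ mul w (inv w) = e /\ mul (inv w) w = e) ->
  (forall w1 w2, inW w1 -> inW w2 -> (forall x, shift (d w1 x) x = shift (d w2 x) x) -> w1 = w2) ->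
  exists Phi : W -> conf Sig -> conf Sig,
    (forall w, inW w -> @TFG Sig (Phi w)) /\
    (forall w1 w2, inW w1 -> inW w2 -> Phi (mul w1 w2) = Phi w1 \o Phi w2) /\
    (forall w1 w2, inW w1 -> inW w2 -> Phi w1 = Phi w2 -> w1 = w2).
Proof.
move=> dc dcomp de dinv dfaith.
pose D w y := d w (Pi y) * Kb.
pose Phi w y := shift (D w y) y.
have Dc w : inW w -> int_continuous (D w).
  move=> iw y; have [N hN] := dc w iw (Pi y).
  exists (N.+1 * KL.+1)%N => y' ag; rewrite /D hN //; exact: Pi_cont.
have comp w1 w2 : inW w1 -> inW w2 -> Phi (mul w1 w2) = Phi w1 \o Phi w2.
  move=> i1 i2; apply: funext => y /=; rewrite /Phi /D Pi_shift shiftS dcomp //.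
  by rewrite mulrDl.
have Pe : Phi e = id by apply: funext => y; rewrite /Phi /D de mul0r shift0.
exists Phi; split; [|split] => //.
- move=> w iw; have [ii [m1 m2]] := dinv w iw; split.
  + split; first exact: shift_cont (Dc w iw).
    exists (Phi (inv w)); split; [|split].
    * by move=> y; rewrite -[Phi (inv w) _]/((Phi (inv w) \o Phi w) y) -comp // m2 Pe.
    * by move=> y; rewrite -[Phi w _]/((Phi w \o Phi (inv w)) y) -comp // m1 Pe.
    * exact: shift_cont (Dc _ ii).
  + by exists (D w); split => //; apply: Dc.
- move=> w1 w2 i1 i2 eP; apply: dfaith => // x.
  have := congr1 (fun f => Pi (f (Piinv x))) eP; rewrite /Phi /D Pi_Piinv !Pi_shift Pi_Piinv.
  by [].
Qed.
End Lift.

End P7.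
Import P7.



Section Final.
Variables (A : finZmodType) (hA : (1 < #|A|)%N) (Gam : finType) (hGam : alphabet Gam)
  (G : set (endo Gam)) (hG : subgroup_TFG G)
  (c : endo Gam -> conf Gam -> int) (hc : cocycles_of G c).

Notation F := (@F A Gam G c).
Notation P := (@P A Gam G c).
Notation dm := (@dm A Gam G c).

Definition we : wreath_carrier A Gam := ((fun _ => 0), id).
Definition winv (w : wreath_carrier A Gam) : wreath_carrier A Gam :=
  ((fun h => - w.1 (w.2 \o h)), dfinv w.2).

Lemma F0 x t : F x (fun _ => 0) t = 0.
Proof. by apply: fsbig1 => h _; rewrite if_same. Qed.

Lemma dm_e x : dm we x = 0.
Proof.
rewrite /P4.dm /P4.P /=; case: ifP => al //.
rewrite (act_id hGam hG hc) F0 addr0; have [_ e] := encode hA al; exact: e.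
Qed.

Lemma winv_spec w : in_wreath G w ->
  in_wreath G (winv w) /\ wmul w (winv w) = we /\ wmul (winv w) w = we.
Proof.
case: w => f g [/= Gg [sG fin]].
have Gf := G_finv hG Gg.
split; [split; [|split] |split].
- exact: Gf.
- move=> h /= hs.
  have Ggh : G (g \o h).
    apply: sG; rewrite /supp /=; apply/eqP => e0; move: hs; rewrite /supp /= e0 oppr0 eqxx.
    by [].
  have -> : h = dfinv g \o (g \o h) by apply: funext => u /=; rewrite (finvK1 hG Gg).
  exact: G_comp.
- apply: (sub_finite_set _ (finite_image (fun h : endo Gam => dfinv g \o h) fin)) => h /= hs.
  exists (g \o h).
    rewrite /supp /=; apply/eqP => e0; move: hs; rewrite /supp /= e0 oppr0 eqxx.
    by [].
  by apply: funext => u /=; rewrite (finvK1 hG Gg).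
- rewrite /wmul /we /=; congr pair.
    apply: funext => h; rewrite (_ : g \o (dfinv g \o h) = h) ?subrr //.
    by apply: funext => u /=; rewrite (finvK2 hG Gg).
  by apply: funext => u /=; rewrite (finvK2 hG Gg).
- rewrite /wmul /we /= (finv_finv hG Gg); congr pair.
    by apply: funext => h; rewrite addrC subrr.
  by apply: funext => u /=; rewrite (finvK1 hG Gg).
Qed.

End Final.

Theorem mainTheorem12 (A : finZmodType) (hA : (1 < #|A|)%N)
  (Gam : finType) (hGam : alphabet Gam)
  (G : set (endo Gam)) (hG : subgroup_TFG G)
  (c : endo Gam -> conf Gam -> int) (hc : cocycles_of G c)
  (hmove : move_faithful A G c)
  (Sig : finType) (hSig : alphabet Sig) :
  exists Phi : wreath_carrier A Gam -> (conf Sig -> conf Sig),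
    (forall w, in_wreath G w -> @TFG Sig (Phi w)) /\
    (forall w1 w2, in_wreath G w1 -> in_wreath G w2 ->
       Phi (wmul w1 w2) = Phi w1 \o Phi w2) /\
    (forall w1 w2, in_wreath G w1 -> in_wreath G w2 ->
       Phi w1 = Phi w2 -> w1 = w2).
Proof.
have [a [b ab]] := alphabet_two hGam.
pose l0 : Lam A Gam := (Ordinal (NN_gt0 hA), (a, false)).
apply: (lift_main l0 hSig (inW := in_wreath G) (mul := @wmul A Gam) (e := we A Gam)
  (inv := @winv A Gam) (d := @dm A Gam G c)).
- by move=> w iw; apply: dm_loc.
- by move=> w1 w2 i1 i2 x; apply: dm_comp.
- by move=> x; apply: dm_e.
- by move=> w iw; apply: winv_spec.
- by move=> w1 w2 i1 i2; apply: faithful.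
Qed.
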